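(* Let $M$ be a unique expansion matroid on a finite set $E$ with $r(M)>0$, and write $F(M)=\{K_1,K_2,\dots,K_t\}$ with the $K_i$ distinct. Then $\mathcal{B}(M)=\{\{b_1,b_2,\dots,b_t\}: b_i\in K_i,\ 1\le i\le t\}$.
   Context: For a matroid $M$: $\mathcal{I}(M)$ its independent sets, $\mathcal{B}(M)$ its bases, $r(M)$ the size of a base, $r(X)$ the rank of $X\subseteq E$. $s(M)=\{A\in\mathcal{I}(M): |A|=r(M)-1\}$; $K_M(X)=\{a\in E: r(X\cup\{a\})=r(X)+1\}$; $F(M)=\{K_M(X): X\in s(M)\}$. $M$ is a unique expansion matroid if for every $B\in\mathcal{B}(M)$ and every $A\in s(M)$, whenever $e_1,e_2\in B$ satisfy $A\cup\{e_1\}\in\mathcal{B}(M)$ and $A\cup\{e_2\}\in\mathcal{B}(M)$, then $e_1=e_2$. *)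

(* Defs.v *)
From mathcomp Require Import all_boot.
Set Implicit Arguments. Unset Strict Implicit. Unset Printing Implicit Defensive.

Section Matroid.
Variable E : finType.
Implicit Types (I : {set {set E}}) (A B X : {set E}).

Definition is_matroid I : Prop :=
  [/\ set0 \in I,
      (forall A B, B \in I -> A \subset B -> A \in I) &
      (forall A B, A \in I -> B \in I -> #|A| < #|B| ->
         exists2 x, x \in B :\: A & x |: A \in I)].

Definition bases I : {set {set E}} := [set B | maxset (fun A => A \in I) B].

Definition rank I X : nat := \max_(A in I | A \subset X) #|A|.

Definition mrank I : nat := rank I setT.

Definition sM I : {set {set E}} := [set A in I | #|A| == (mrank I).-1].

Definition KM I X : {set E} := [set a | rank I (a |: X) == (rank I X).+1].

Definition FM I : {set {set E}} := [set KM I X | X in sM I].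

Definition unique_expansion I : Prop :=
  forall B A e1 e2, B \in bases I -> A \in sM I ->
    e1 \in B -> e2 \in B ->
    e1 |: A \in bases I -> e2 |: A \in bases I -> e1 = e2.

End Matroid.

(* Main.v *)
Require Import Defs.
From mathcomp Require Import all_boot zify.
Set Implicit Arguments. Unset Strict Implicit. Unset Printing Implicit Defensive.

Lemma card_le_r (E : finType) (I : {set {set E}}) A : A \in I -> #|A| <= mrank I.
Proof.
move=> hA; rewrite /mrank /rank.
by apply: (leq_bigmax_cond (F := fun A : {set E} => #|A|)); rewrite hA subsetT.
Qed.

Lemma ex_r (E : finType) (I : {set {set E}}) : is_matroid I ->
  exists2 A, A \in I & #|A| = mrank I.
Proof.
case=> h0 _ _; rewrite /mrank /rank.
have P0 : (set0 \in I) && (set0 \subset [set: E]) by rewrite h0 sub0set.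
rewrite (bigmax_eq_arg set0) //.
case: arg_maxnP => // A /andP[hA _] _; by exists A.
Qed.

Lemma base_iff (E : finType) (I : {set {set E}}) B : is_matroid I ->
  B \in bases I <-> B \in I /\ #|B| = mrank I.
Proof.
move=> hM; have [A hA cA] := ex_r hM; case: hM => h0 h2 h3.
rewrite inE; split.
- move/maxsetP=> [hB hmax]; split => //.
  apply/eqP; rewrite eqn_leq card_le_r //=; rewrite leqNgt; apply/negP => lt.
  have [x /setDP [xA xB] hx] := h3 _ _ hB hA ltac:(by rewrite cA).
  have := hmax _ hx (subsetUr _ _) => e.
  by move: xB; rewrite -e setU11.
- move=> [hB cB]; apply/maxsetP; split => // C hC sBC.
  apply/eqP; rewrite eq_sym eqEcard sBC /= cB; exact: card_le_r.
Qed.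

Lemma rank_ind (E : finType) (I : {set {set E}}) A : A \in I -> rank I A = #|A|.
Proof.
move=> hA; apply/eqP; rewrite eqn_leq; apply/andP; split.
- by apply/bigmax_leqP => C /andP[_ sC]; apply: subset_leq_card.
- by apply: (leq_bigmax_cond (F := fun A : {set E} => #|A|)); rewrite hA subxx.
Qed.

Lemma KM_iff (E : finType) (I : {set {set E}}) A a : is_matroid I -> 0 < mrank I ->
  A \in sM I -> (a \in KM I A <-> a |: A \in bases I).
Proof.
move=> hM r0; rewrite inE => /andP[hA /eqP cA].
rewrite inE (rank_ind hA) cA prednK //; split.
- move=> /eqP hr; apply/(base_iff _ hM); case hI: (a |: A \in I).
    by split => //; rewrite -(rank_ind hI).
  have : rank I (a |: A) <= (mrank I).-1.
    apply/bigmax_leqP => C /andP[hC sC].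
    have lt : #|C| < #|a |: A|.
      rewrite ltn_neqAle subset_leq_card // andbT.
      apply/negP => /eqP e; have : C = a |: A by apply/eqP; rewrite eqEcard sC e leqnn.
      by move=> eC; rewrite -eC hC in hI.
    rewrite -ltnS prednK //; apply: (leq_trans lt).
    rewrite cardsU1 cA; case: (a \notin A); [by rewrite add1n prednK | by rewrite add0n leq_pred].
  by rewrite hr -ltnS prednK // ltnn.
- by move=> /(base_iff _ hM) [hI cI]; rewrite (rank_ind hI) cI.
Qed.

Lemma KM_notin (E : finType) (I : {set {set E}}) A x : is_matroid I -> 0 < mrank I ->
  A \in sM I -> x \in KM I A -> x \notin A.
Proof.
move=> hM r0 hA /(KM_iff _ hM r0 hA) /(base_iff _ hM) [_ c].
move: hA; rewrite inE => /andP[_ /eqP cA].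
apply/negP => xA; move: c; rewrite cardsU1 xA add0n cA => e.
by move: r0 e; lia.
Qed.

Lemma augK (E : finType) (I : {set {set E}}) A C : is_matroid I -> 0 < mrank I ->
  A \in sM I -> C \in bases I -> exists2 x, x \in C & x \in KM I A.
Proof.
move=> hM r0 hA /(base_iff _ hM) [hC cC].
have hA' := hA; move: hA'; rewrite inE => /andP[hAI /eqP cA].
case: (hM) => _ _ h3.
have [x /setDP [xC xA] hx] := h3 _ _ hAI hC ltac:(by rewrite cA cC prednK).
exists x => //; apply/(KM_iff _ hM r0 hA)/(base_iff _ hM); split => //.
by rewrite cardsU1 xA cA add1n prednK.
Qed.

Lemma Kb (E : finType) (I : {set {set E}}) B b : is_matroid I -> 
  B \in bases I -> b \in B -> B :\ b \in sM I /\ b |: (B :\ b) \in bases I.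
Proof.
move=> hM hB bB; rewrite setD1K //; split => //.
move: hB => /(base_iff _ hM) [hBI cB]; case: (hM) => _ h2 _.
rewrite inE (h2 _ _ hBI (subsetDl _ _)) /=.
by rewrite -cB (cardsD1 b B) bB add1n.
Qed.

Lemma Dsub (E : finType) (I : {set {set E}}) A A' b : is_matroid I -> unique_expansion I ->
  0 < mrank I -> A \in sM I -> A' \in sM I -> b \in KM I A -> b \in KM I A' ->
  KM I A \subset KM I A'.
Proof.
move=> hM hUE r0 hA hA' bK bK'.
have step1 : forall a, a \in A -> a \notin KM I A'.
  move=> a aA; apply/negP => aK.
  have hC := (iffLR (KM_iff _ hM r0 hA) bK).
  have e := hUE _ _ _ _ hC hA' (setU1r b aA) (setU11 b A)
     (iffLR (KM_iff _ hM r0 hA') aK) (iffLR (KM_iff _ hM r0 hA') bK').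
  by move: (KM_notin hM r0 hA bK); rewrite -e aA.
apply/subsetP => e eK.
have [x xC xK] := augK hM r0 hA' (iffLR (KM_iff _ hM r0 hA) eK).
case/setU1P: xC => [<- //|xA].
by move: (step1 _ xA); rewrite xK.
Qed.

Lemma FM_disj (E : finType) (I : {set {set E}}) K K' x : is_matroid I -> unique_expansion I ->
  0 < mrank I -> K \in FM I -> K' \in FM I -> x \in K -> x \in K' -> K = K'.
Proof.
move=> hM hUE r0 /imsetP [A hA ->] /imsetP [A' hA' ->] xK xK'.
by apply/eqP; rewrite eqEsubset !(Dsub hM hUE r0 _ _ xK xK', Dsub hM hUE r0 _ _ xK' xK).
Qed.

Lemma fimage_base (E : finType) (I : {set {set E}}) (f : {set E} -> E) B :
  is_matroid I -> unique_expansion I -> 0 < mrank I ->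
  (forall K, K \in FM I -> f K \in K) -> B \in bases I ->
  (forall K, K \in FM I -> f K \in B) -> B = f @: FM I.
Proof.
move=> hM hUE r0 hf hB hfB; apply/setP => y; apply/idP/imsetP.
- move=> yB; have [hA hyA] := Kb hM hB yB.
  have hK : KM I (B :\ y) \in FM I by apply: imset_f.
  exists (KM I (B :\ y)) => //.
  apply: (hUE _ _ _ _ hB hA yB (hfB _ hK) hyA).
  exact/(KM_iff _ hM r0 hA)/hf.
- by case=> K hK ->; apply: hfB.
Qed.

Lemma rev_dir (E : finType) (I : {set {set E}}) (f : {set E} -> E) :
  is_matroid I -> unique_expansion I -> 0 < mrank I ->
  (forall K, K \in FM I -> f K \in K) ->
  forall n B, B \in bases I -> #|[set K in FM I | f K \notin B]| <= n ->
  f @: FM I \in bases I.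
Proof.
move=> hM hUE r0 hf; elim=> [|n IH] B hB.
all: have [e0|[K]] := set_0Vmem [set K in FM I | f K \notin B].
- move=> _; rewrite -(fimage_base hM hUE r0 hf hB) // => K hK.
  apply/negPn/negP => nB; have : K \in set0 by rewrite -e0 inE hK nB.
  by rewrite in_set0.
- by move=> hK; rewrite leqn0 cards_eq0 => /eqP e; rewrite e inE in hK.
- move=> _; rewrite -(fimage_base hM hUE r0 hf hB) // => K hK.
  apply/negPn/negP => nB; have : K \in set0 by rewrite -e0 inE hK nB.
  by rewrite in_set0.
rewrite inE => /andP[hK nB] hc.
have hK' := hK; move: hK' => /imsetP [A hA eK].
have [b bB bK] := augK hM r0 hA hB; rewrite -eK in bK.
have [hA' hbA'] := Kb hM hB bB.
have hK2 : KM I (B :\ b) \in FM I by apply: imset_f.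
have eK2 := FM_disj hM hUE r0 hK hK2 bK (iffRL (KM_iff _ hM r0 hA') hbA').
have hB' : f K |: (B :\ b) \in bases I.
  by apply/(KM_iff _ hM r0 hA'); rewrite -eK2; apply: hf.
apply: (IH _ hB'); rewrite -ltnS; apply: leq_trans hc.
rewrite (cardsD1 K [set K in FM I | f K \notin B]) inE hK nB add1n ltnS.
apply: subset_leq_card; apply/subsetP => K' ; rewrite !inE => /andP[hK' nB'].
rewrite hK' /=; apply/andP; split.
- by apply/eqP => e; rewrite e eqxx in nB'.
- apply/negP => fB.
  case: (eqVneq (f K') b) => [e|ne]; last by rewrite ne fB orbT in nB'.
  have bK' : b \in K' by rewrite -e hf.
  have := FM_disj hM hUE r0 hK hK' bK bK' => eKK.
  by rewrite -eKK eqxx in nB'.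
Qed.

Theorem proposition8 (E : finType) (I : {set {set E}}) :
  is_matroid I -> unique_expansion I -> 0 < mrank I ->
  forall B : {set E},
    B \in bases I <->
    exists f : {set E} -> E,
      (forall K, K \in FM I -> f K \in K) /\ B = f @: FM I.
Proof.
move=> hM hUE r0 B; split.
- move=> hB.
  have [x0 _] : exists x0 : E, x0 \in B.
    move: hB => /(base_iff _ hM) [_ cB].
    by apply/set0Pn; rewrite -card_gt0 cB.
  pose f K := odflt x0 [pick x in B :&: K].
  have hf : forall K, K \in FM I -> f K \in B /\ f K \in K.
    move=> K /imsetP [A hA ->].
    have [y yB yK] := augK hM r0 hA hB.
    rewrite /f; case: pickP => [z|/(_ y)]; first by rewrite inE => /andP[].
    by rewrite inE yB yK.
  exists f; split; first by move=> K /hf [].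
  by apply: (fimage_base hM hUE r0) => // K /hf [].
- move=> [f [hf ->]].
  have [A hA cA] := ex_r hM.
  have hB : A \in bases I by apply/(base_iff _ hM).
  exact: (rev_dir hM hUE r0 hf hB (leqnn _)).
Qed.
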